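(* Let $s_1^\pm,s_2^\pm\in\mathbb{R}^3$ satisfy $$|s_1^+-s_1^-|+|s_2^+-s_2^-|\le|s_1^+-s_2^-|+|s_2^+-s_1^-|,$$ and for $m=1,2$ let $L_m$ be the closed segment joining $s_m^+$ and $s_m^-$. Then $$\operatorname{dist}(L_1,L_2)\ge\frac1{\sqrt2}\min_{m\ne n}\operatorname{dist}(s_m^\pm,L_n),$$ where the minimum is over $m\neq n$ in $\{1,2\}$ and both choices of sign. *)

(* Defs.v *)
From Stdlib Require Import Reals.
From Coquelicot Require Import Coquelicot.
Open Scope R_scope.

Definition vec3 : Type := (R * R * R)%type.

Definition edist (p q : vec3) : R :=
  let '(p1, p2, p3) := p in let '(q1, q2, q3) := q in
  sqrt ((p1 - q1) ^ 2 + (p2 - q2) ^ 2 + (p3 - q3) ^ 2).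

Definition lerp (a b : vec3) (t : R) : vec3 :=
  let '(a1, a2, a3) := a in let '(b1, b2, b3) := b in
  ((1 - t) * a1 + t * b1, (1 - t) * a2 + t * b2, (1 - t) * a3 + t * b3).

Definition segment (a b : vec3) : vec3 -> Prop :=
  fun x => exists t, 0 <= t <= 1 /\ x = lerp a b t.

Definition dist_pt (p : vec3) (A : vec3 -> Prop) : R :=
  real (Glb_Rbar (fun d => exists x, A x /\ d = edist p x)).

Definition dist_sets (A B : vec3 -> Prop) : R :=
  real (Glb_Rbar (fun d => exists x y, A x /\ B y /\ d = edist x y)).

(* Main.v *)
Require Import Defs.
From Stdlib Require Import Reals.
From Coquelicot Require Import Coquelicot.
From Stdlib Require Import Lra Psatz.
Open Scope R_scope.

Definition Fq (W0 W1 W2 L1 L2 c s t : R) : R :=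
  W0 + 2*s*W1 - 2*t*W2 + s^2*L1 + t^2*L2 - 2*s*t*c.

Definition Good (F : R -> R -> R) (D : R) : Prop :=
  exists u, 0 <= u <= 1 /\
    (F 0 u <= 2*D \/ F 1 u <= 2*D \/ F u 0 <= 2*D \/ F u 1 <= 2*D).

Lemma Core1 (W0 W1 W2 L1 L2 c s t : R) :
  0 < s < 1 -> 0 < t < 1 -> 0 <= L1 -> 0 <= L2 -> c^2 <= L1*L2 ->
  (forall a b, 0 <= Fq W0 W1 W2 L1 L2 c a b) ->
  W1 + s*L1 - t*c = 0 -> - W2 + t*L2 - s*c = 0 ->
  s * sqrt L1 + (1-t) * sqrt L2 <= sqrt (Fq W0 W1 W2 L1 L2 c 0 1) ->
  s * sqrt L1 <= (1-t) * sqrt L2 ->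
  Good (Fq W0 W1 W2 L1 L2 c) (Fq W0 W1 W2 L1 L2 c s t).
Proof.
  intros Hs Ht HL1 HL2 Hc Hnn HW1 HW2 H1 Hle.
  assert (En1 := sqrt_sqrt L1 HL1). assert (En2 := sqrt_sqrt L2 HL2).
  assert (Pn1 := sqrt_pos L1). assert (Pn2 := sqrt_pos L2).
  set (n1 := sqrt L1) in *. set (n2 := sqrt L2) in *.
  set (D := Fq W0 W1 W2 L1 L2 c s t).
  assert (HW1' : W1 = t*c - s*L1) by lra.
  assert (HW2' : W2 = t*L2 - s*c) by lra.
  assert (HF01 : Fq W0 W1 W2 L1 L2 c 0 1 = D + s^2*L1 + (1-t)^2*L2 + 2*s*(1-t)*c).
  { unfold D, Fq. rewrite HW1', HW2'. ring. }
  assert (H01 := Hnn 0 1).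
  assert (Es := sqrt_sqrt _ H01).
  assert (Ps := sqrt_pos (Fq W0 W1 W2 L1 L2 c 0 1)).
  set (S := sqrt (Fq W0 W1 W2 L1 L2 c 0 1)) in *.
  assert (Hsq : (s*n1 + (1-t)*n2)^2 <= S*S).
  { assert (0 <= s*n1 + (1-t)*n2) by nra. nra. }
  assert (KEY : 2*s*(1-t)*(n1*n2 - c) <= D).
  { rewrite Es, HF01 in Hsq. rewrite <- En1, <- En2 in Hsq. nra. }
  assert (Hcab : c <= n1*n2 /\ -c <= n1*n2).
  { assert (c^2 <= (n1*n2)^2) by (rewrite <- En1, <- En2 in Hc; nra).
    assert (0 <= n1*n2) by nra. split; nra. }
  assert (HD0 : 0 <= D).
  { assert (0 <= s*(1-t)) by nra. assert (0 <= n1*n2 - c) by lra. nra. }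
  assert (Ha : s^2*(L1*L2 - c^2) <= D*L2).
  { assert (E : s^2*(L1*L2 - c^2) = (s*(n1*n2-c)) * (s*(n1*n2+c))).
    { rewrite <- En1, <- En2. ring. }
    assert (s*(n1*n2+c) <= 2*(1-t)*L2).
    { rewrite <- En2. nra. }
    assert (0 <= s*(n1*n2-c)) by nra.
    rewrite E. nra. }
  destruct (Rle_or_lt (s*c) (t*L2)) as [Hsub|Hsub].
  - destruct (Req_dec L2 0) as [Z|NZ].
    +
      assert (n2 = 0) by nra.
      assert (n1 = 0) by nra.
      assert (c = 0) by nra.
      exists t. split; [lra|]. left.
      assert (Fq W0 W1 W2 L1 L2 c 0 t = D).
      { assert (L1 = 0) by nra. unfold D, Fq. rewrite HW1'.
        replace L1 with 0 by auto. replace c with 0 by auto. ring. }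
      lra.
    + assert (PL2 : 0 < L2) by lra.
      exists (t - s*c/L2). split.
      * split.
        -- apply Rmult_le_reg_r with L2; [lra|]. field_simplify; [|lra]. lra.
        -- apply Rmult_le_reg_r with L2; [lra|]. field_simplify; [|lra].
           rewrite <- En2. nra.
      * left.
        assert (E : Fq W0 W1 W2 L1 L2 c 0 (t - s*c/L2) * L2 = D*L2 + s^2*(L1*L2 - c^2)).
        { unfold D, Fq. rewrite HW1', HW2'. field. lra. }
        apply Rmult_le_reg_r with L2; [lra|]. nra.
  - assert (Pc : 0 < c) by nra.
    assert (Pn12 : 0 < n1*n2) by lra.
    assert (0 < n1) by nra. assert (0 < n2) by nra.
    assert (PL1 : 0 < L1) by nra. assert (PL2 : 0 < L2) by nra.
    assert (Htn : t*n2 < s*n1).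
    { apply Rmult_lt_reg_r with n2; [lra|]. nra. }
    exists (s - t*c/L1). split.
    * split.
      -- apply Rmult_le_reg_r with L1; [lra|]. field_simplify; [|lra].
         assert (t*c <= t*n1*n2) by nra.
         assert (t*n1*n2 <= s*n1*n1) by nra. nra.
      -- assert (0 <= t*c/L1). { apply Rmult_le_pos; [nra|]. apply Rlt_le, Rinv_0_lt_compat; lra. }
         lra.
    * right; right; left.
      assert (E : Fq W0 W1 W2 L1 L2 c (s - t*c/L1) 0 * L1 = D*L1 + t^2*(L1*L2 - c^2)).
      { unfold D, Fq. rewrite HW1', HW2'. field. lra. }
      assert (Ht2 : t^2*L2 <= s^2*L1).
      { rewrite <- En1, <- En2. assert (0 <= t*n2) by nra. nra. }
      assert (0 <= L1*L2 - c^2) by lra.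
      assert (Hb : t^2*(L1*L2 - c^2)*L2 <= D*L1*L2) by nra.
      assert (t^2*(L1*L2 - c^2) <= D*L1).
      { apply Rmult_le_reg_r with L2; [lra|]. nra. }
      apply Rmult_le_reg_r with L1; [lra|]. nra.
Qed.

Lemma Core2 (W0 W1 W2 L1 L2 c s t : R) :
  0 < s < 1 -> 0 < t < 1 -> 0 <= L1 -> 0 <= L2 -> c^2 <= L1*L2 ->
  (forall a b, 0 <= Fq W0 W1 W2 L1 L2 c a b) ->
  W1 + s*L1 - t*c = 0 -> - W2 + t*L2 - s*c = 0 ->
  s * sqrt L1 + (1-t) * sqrt L2 <= sqrt (Fq W0 W1 W2 L1 L2 c 0 1) ->
  Good (Fq W0 W1 W2 L1 L2 c) (Fq W0 W1 W2 L1 L2 c s t).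
Proof.
  intros Hs Ht HL1 HL2 Hc Hnn HW1 HW2 H1.
  destruct (Rle_or_lt (s * sqrt L1) ((1-t) * sqrt L2)) as [Hle|Hlt].
  - apply Core1; auto.
  - set (W0' := W0 + 2*W1 - 2*W2 + L1 + L2 - 2*c).
    set (W1' := W2 - L2 + c). set (W2' := W1 + L1 - c).
    assert (EF : forall a b, Fq W0' W1' W2' L2 L1 c a b = Fq W0 W1 W2 L1 L2 c (1-b) (1-a)).
    { intros; unfold Fq, W0', W1', W2'; ring. }
    assert (G : Good (Fq W0' W1' W2' L2 L1 c) (Fq W0' W1' W2' L2 L1 c (1-t) (1-s))).
    { apply Core1; try lra.
      - intros; rewrite EF; apply Hnn.
      - unfold W1'; lra.
      - unfold W2'; lra.
      - rewrite EF. replace (1-1) with 0 by ring. replace (1-0) with 1 by ring.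
        replace (1 - (1-s)) with s by ring. lra. }
    rewrite EF in G. replace (1 - (1-s)) with s in G by ring.
    replace (1 - (1-t)) with t in G by ring.
    destruct G as [u [Hu G]]. rewrite !EF in G.
    replace (1-0) with 1 in G by ring. replace (1-1) with 0 in G by ring.
    exists (1-u). split; [lra|]. tauto.
Qed.

Lemma Core3 (W0 W1 W2 L1 L2 c s t : R) :
  0 < s < 1 -> 0 < t < 1 -> 0 <= L1 -> 0 <= L2 -> c^2 <= L1*L2 ->
  (forall a b, 0 <= Fq W0 W1 W2 L1 L2 c a b) ->
  W1 + s*L1 - t*c = 0 -> - W2 + t*L2 - s*c = 0 ->
  sqrt L1 + sqrt L2 <= sqrt (Fq W0 W1 W2 L1 L2 c 0 1) + sqrt (Fq W0 W1 W2 L1 L2 c 1 0) ->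
  Good (Fq W0 W1 W2 L1 L2 c) (Fq W0 W1 W2 L1 L2 c s t).
Proof.
  intros Hs Ht HL1 HL2 Hc Hnn HW1 HW2 H.
  destruct (Rle_or_lt (s * sqrt L1 + (1-t) * sqrt L2) (sqrt (Fq W0 W1 W2 L1 L2 c 0 1))) as [H1|H1].
  - apply Core2; auto.
  - set (W0' := W0 + 2*W1 - 2*W2 + L1 + L2 - 2*c).
    set (W1' := - W1 - L1 + c). set (W2' := - W2 + L2 - c).
    assert (EF : forall a b, Fq W0' W1' W2' L1 L2 c a b = Fq W0 W1 W2 L1 L2 c (1-a) (1-b)).
    { intros; unfold Fq, W0', W1', W2'; ring. }
    assert (G : Good (Fq W0' W1' W2' L1 L2 c) (Fq W0' W1' W2' L1 L2 c (1-s) (1-t))).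
    { apply Core2; try lra.
      - intros; rewrite EF; apply Hnn.
      - unfold W1'; lra.
      - unfold W2'; lra.
      - rewrite EF. replace (1-1) with 0 by ring. replace (1-0) with 1 by ring.
        replace (1 - (1-t)) with t by ring. lra. }
    rewrite EF in G. replace (1 - (1-s)) with s in G by ring.
    replace (1 - (1-t)) with t in G by ring.
    destruct G as [u [Hu G]]. rewrite !EF in G.
    replace (1-0) with 1 in G by ring. replace (1-1) with 0 in G by ring.
    exists (1-u). split; [lra|]. tauto.
Qed.

Lemma interior1 (a b x : R) : 0 <= a -> 0 < x < 1 ->
  (forall y, 0 <= y <= 1 -> a*x^2 + b*x <= a*y^2 + b*y) -> 2*a*x + b = 0.
Proof.
  intros Ha Hx H.
  set (k := 2*a*x + b).
  destruct (Rtotal_order k 0) as [Hk|[Hk|Hk]]; [|exact Hk|].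
  - set (h := (1-x)*(-k)/(-k+2*a+2)).
    assert (Hd : 0 < -k+2*a+2) by lra.
    assert (Hh0 : 0 < h) by (unfold h; apply Rdiv_lt_0_compat; nra).
    assert (Hh1 : h <= 1 - x).
    { unfold h. apply Rmult_le_reg_r with (-k+2*a+2); [lra|].
      field_simplify; [|lra]. nra. }
    assert (Hah : a*h < -k).
    { apply Rmult_lt_reg_r with (-k+2*a+2); [lra|].
      assert (E1 : a*h*(-k+2*a+2) = a*(1-x)*(-k)) by (unfold h; field; lra).
      rewrite E1. assert (0 < (-k)*(2*a+2 - a*(1-x) - k)) by (apply Rmult_lt_0_compat; nra). nra. }
    specialize (H (x+h) ltac:(lra)).
    assert (E : a*(x+h)^2 + b*(x+h) - (a*x^2 + b*x) = h*(k + a*h)) by (unfold k; ring).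
    nra.
  - set (h := x*k/(k+2*a+2)).
    assert (Hd : 0 < k+2*a+2) by lra.
    assert (Hh0 : 0 < h) by (unfold h; apply Rdiv_lt_0_compat; nra).
    assert (Hh1 : h <= x).
    { unfold h. apply Rmult_le_reg_r with (k+2*a+2); [lra|].
      field_simplify; [|lra]. nra. }
    assert (Hah : a*h < k).
    { apply Rmult_lt_reg_r with (k+2*a+2); [lra|].
      assert (E1 : a*h*(k+2*a+2) = a*x*k) by (unfold h; field; lra).
      rewrite E1. assert (0 < k*(2*a+2 - a*x + k)) by (apply Rmult_lt_0_compat; nra). nra. }
    specialize (H (x-h) ltac:(lra)).
    assert (E : a*(x-h)^2 + b*(x-h) - (a*x^2 + b*x) = -h*(k - a*h)) by (unfold k; ring).
    nra.
Qed.

Definition clamp (z : R) : R := (Rabs z - Rabs (z - 1) + 1) / 2.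

Ltac cont := match goal with
 | |- continuity_pt (fun x => @?A x + @?B x) _ => apply (continuity_pt_plus A B); cont
 | |- continuity_pt (fun x => @?A x - @?B x) _ => apply (continuity_pt_minus A B); cont
 | |- continuity_pt (fun x => @?A x * @?B x) _ => apply (continuity_pt_mult A B); cont
 | |- continuity_pt (fun x => @?A x / @?B x) _ => apply (continuity_pt_mult A (fun x => / B x)); cont
 | |- continuity_pt (fun x => (@?A x) ^ 2) _ => apply (continuity_pt_mult A (fun x => A x * 1)); cont
 | |- continuity_pt (fun x => Rabs (@?A x)) _ => apply (continuity_pt_comp A Rabs); [cont | apply Rcontinuity_abs]
 | |- continuity_pt (fun x => x) _ => apply derivable_continuous_pt; apply derivable_pt_id
 | |- continuity_pt (fun x => ?c) _ => apply continuity_pt_const; intros ??; reflexivity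
 | _ => idtac
 end.

Lemma clamp_bounds z : 0 <= clamp z <= 1 /\ (z <= 0 -> clamp z = 0) /\
  (0 <= z <= 1 -> clamp z = z) /\ (1 <= z -> clamp z = 1).
Proof.
  unfold clamp.
  destruct (Rle_or_lt 0 z); destruct (Rle_or_lt 0 (z-1));
  repeat first [rewrite (Rabs_pos_eq z) by lra | rewrite (Rabs_left z) by lra
               | rewrite (Rabs_pos_eq (z-1)) by lra | rewrite (Rabs_left (z-1)) by lra];
  repeat split; intros; lra.
Qed.

Lemma clamp_min z b : 0 <= b <= 1 -> (clamp z - z)^2 <= (b - z)^2.
Proof.
  intros Hb. destruct (clamp_bounds z) as [Hc [H0 [H1 H2]]].
  destruct (Rle_or_lt z 0). rewrite H0 by lra. nra.
  destruct (Rle_or_lt z 1). rewrite H1 by lra. assert (0 <= (b-z)^2) by apply pow2_ge_0. replace ((z-z)^2) with 0 by ring. lra.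
  rewrite H2 by lra. nra.
Qed.

Lemma MinEx (W0 W1 W2 L1 L2 c : R) :
  0 <= L2 -> (L2 = 0 -> W2 = 0 /\ c = 0) ->
  exists s t, 0 <= s <= 1 /\ 0 <= t <= 1 /\
   forall a b, 0 <= a <= 1 -> 0 <= b <= 1 ->
     Fq W0 W1 W2 L1 L2 c s t <= Fq W0 W1 W2 L1 L2 c a b.
Proof.
  intros HL2 HZ.
  set (T := fun s => clamp ((W2 + s*c)/L2)).
  assert (HT : forall s b, 0 <= b <= 1 -> Fq W0 W1 W2 L1 L2 c s (T s) <= Fq W0 W1 W2 L1 L2 c s b).
  { intros s b Hb. destruct (Req_dec L2 0) as [Z|NZ].
    - destruct (HZ Z) as [-> ->]. unfold Fq. rewrite Z. lra.
    - set (z := (W2 + s*c)/L2).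
      assert (E : forall b, Fq W0 W1 W2 L1 L2 c s b = W0 + 2*s*W1 + s^2*L1 - L2*z^2 + L2*(b - z)^2).
      { intros; unfold Fq, z; field; lra. }
      rewrite !E. unfold T. fold z. pose proof (clamp_min z b Hb). nra. }
  destruct (continuity_ab_min (fun s => Fq W0 W1 W2 L1 L2 c s (T s)) 0 1) as [m [Hm Hm01]].
  { lra. }
  { intros; unfold Fq, T, clamp. cont. }
  exists m, (T m). split; [auto|]. split.
  { unfold T; apply clamp_bounds. }
  intros a b Ha Hb. eapply Rle_trans. apply Hm. exact Ha. apply HT; auto.
Qed.

Lemma Good_le F D D' : Good F D -> D <= D' -> Good F D'.
Proof. intros [u [Hu G]] H; exists u; split; auto; lra. Qed.

Lemma AbsMain (W0 W1 W2 L1 L2 c : R) :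
  0 <= L1 -> 0 <= L2 -> c^2 <= L1*L2 -> (L2 = 0 -> W2 = 0 /\ c = 0) ->
  (forall a b, 0 <= Fq W0 W1 W2 L1 L2 c a b) ->
  sqrt L1 + sqrt L2 <= sqrt (Fq W0 W1 W2 L1 L2 c 0 1) + sqrt (Fq W0 W1 W2 L1 L2 c 1 0) ->
  exists s t, 0 <= s <= 1 /\ 0 <= t <= 1 /\
   (forall a b, 0 <= a <= 1 -> 0 <= b <= 1 ->
     Fq W0 W1 W2 L1 L2 c s t <= Fq W0 W1 W2 L1 L2 c a b) /\
   Good (Fq W0 W1 W2 L1 L2 c) (Fq W0 W1 W2 L1 L2 c s t).
Proof.
  intros HL1 HL2 Hc HZ Hnn H.
  destruct (MinEx W0 W1 W2 L1 L2 c HL2 HZ) as [s [t [Hs [Ht Hmin]]]].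
  exists s, t. do 3 (split; auto).
  set (F := Fq W0 W1 W2 L1 L2 c).
  assert (HD := Hnn s t).
  destruct (Req_dec s 0) as [E|Ns].
  { exists t; split; auto. left. subst. fold F in HD |- *. lra. }
  destruct (Req_dec s 1) as [E|Ns1].
  { exists t; split; auto. right; left. subst. fold F in HD |- *. lra. }
  destruct (Req_dec t 0) as [E|Nt].
  { exists s; split; auto. right; right; left. subst. fold F in HD |- *. lra. }
  destruct (Req_dec t 1) as [E|Nt1].
  { exists s; split; auto. right; right; right. subst. fold F in HD |- *. lra. }
  assert (Hs' : 0 < s < 1) by lra. assert (Ht' : 0 < t < 1) by lra.
  apply Core3; auto.
  - assert (K := interior1 L1 (2*(W1 - t*c)) s HL1 Hs').
    assert (2 * L1 * s + 2 * (W1 - t * c) = 0); [|lra].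
    apply K. intros y Hy. specialize (Hmin y t Hy Ht). unfold Fq in Hmin. nra.
  - assert (K := interior1 L2 (-2*(W2 + s*c)) t HL2 Ht').
    assert (2 * L2 * t + -2 * (W2 + s * c) = 0); [|lra].
    apply K. intros y Hy. specialize (Hmin s y Hs Hy). unfold Fq in Hmin. nra.
Qed.

Lemma edist_pos p q : 0 <= edist p q.
Proof. destruct p as [[? ?] ?]; destruct q as [[? ?] ?]; apply sqrt_pos. Qed.

Lemma glb_lb (E : R -> Prop) : (exists d, E d) -> (forall d, E d -> 0 <= d) ->
  forall d, E d -> real (Glb_Rbar E) <= d.
Proof.
  intros [d0 H0] Hp d Hd.
  destruct (Glb_Rbar_correct E) as [Hlb Hg].
  destruct (Glb_Rbar E) as [r| |] eqn:Eq.
  - exact (Hlb d Hd).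
  - exfalso. exact (Hlb d0 H0).
  - exfalso. assert (Rbar_le (Finite 0) m_infty). { apply Hg. intros x Hx. apply Hp, Hx. }
    exact H.
Qed.

Lemma glb_ge (E : R -> Prop) m : (exists d, E d) -> (forall d, E d -> 0 <= d) ->
  (forall d, E d -> m <= d) -> m <= real (Glb_Rbar E).
Proof.
  intros [d0 H0] Hp Hm.
  destruct (Glb_Rbar_correct E) as [Hlb Hg].
  destruct (Glb_Rbar E) as [r| |] eqn:Eq.
  - assert (Rbar_le (Finite m) (Finite r)). { apply Hg. intros x Hx. apply Hm, Hx. }
    exact H.
  - exfalso. exact (Hlb d0 H0).
  - exfalso. assert (Rbar_le (Finite 0) m_infty). { apply Hg. intros x Hx. apply Hp, Hx. }
    exact H.
Qed.

Theorem lemma5 (s1p s1m s2p s2m : vec3) :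
  edist s1p s1m + edist s2p s2m <= edist s1p s2m + edist s2p s1m ->
  dist_sets (segment s1p s1m) (segment s2p s2m) >=
    / sqrt 2 *
    Rmin (Rmin (dist_pt s1p (segment s2p s2m)) (dist_pt s1m (segment s2p s2m)))
         (Rmin (dist_pt s2p (segment s1p s1m)) (dist_pt s2m (segment s1p s1m))).
Proof.
  intros H.
  destruct s1p as [[a1 a2] a3] eqn:E1p. destruct s1m as [[b1 b2] b3] eqn:E1m.
  destruct s2p as [[p1 p2] p3] eqn:E2p. destruct s2m as [[q1 q2] q3] eqn:E2m.
  rewrite <- E1p, <- E1m, <- E2p, <- E2m in *.
  set (W0 := (a1-p1)^2 + (a2-p2)^2 + (a3-p3)^2).
  set (W1 := (a1-p1)*(b1-a1) + (a2-p2)*(b2-a2) + (a3-p3)*(b3-a3)).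
  set (W2 := (a1-p1)*(q1-p1) + (a2-p2)*(q2-p2) + (a3-p3)*(q3-p3)).
  set (L1 := (b1-a1)^2 + (b2-a2)^2 + (b3-a3)^2).
  set (L2 := (q1-p1)^2 + (q2-p2)^2 + (q3-p3)^2).
  set (c := (b1-a1)*(q1-p1) + (b2-a2)*(q2-p2) + (b3-a3)*(q3-p3)).
  set (F := Fq W0 W1 W2 L1 L2 c).
  assert (EF : forall s t, edist (lerp s1p s1m s) (lerp s2p s2m t) = sqrt (F s t)).
  { intros; subst; simpl; unfold F, Fq, W0, W1, W2, L1, L2, c; f_equal; ring. }
  assert (EP1 : forall u, edist s1p (lerp s2p s2m u) = sqrt (F 0 u)).
  { intros; subst; simpl; unfold F, Fq, W0, W1, W2, L1, L2, c; f_equal; ring. }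
  assert (EP2 : forall u, edist s1m (lerp s2p s2m u) = sqrt (F 1 u)).
  { intros; subst; simpl; unfold F, Fq, W0, W1, W2, L1, L2, c; f_equal; ring. }
  assert (EQ1 : forall u, edist s2p (lerp s1p s1m u) = sqrt (F u 0)).
  { intros; subst; simpl; unfold F, Fq, W0, W1, W2, L1, L2, c; f_equal; ring. }
  assert (EQ2 : forall u, edist s2m (lerp s1p s1m u) = sqrt (F u 1)).
  { intros; subst; simpl; unfold F, Fq, W0, W1, W2, L1, L2, c; f_equal; ring. }
  assert (EL1 : edist s1p s1m = sqrt L1).
  { subst; simpl; unfold L1; f_equal; ring. }
  assert (EL2 : edist s2p s2m = sqrt L2).
  { subst; simpl; unfold L2; f_equal; ring. }
  assert (E01 : edist s1p s2m = sqrt (F 0 1)).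
  { subst; simpl; unfold F, Fq, W0, W1, W2, L1, L2, c; f_equal; ring. }
  assert (E10 : edist s2p s1m = sqrt (F 1 0)).
  { subst; simpl; unfold F, Fq, W0, W1, W2, L1, L2, c; f_equal; ring. }
  assert (HL1 : 0 <= L1) by (unfold L1; repeat apply Rplus_le_le_0_compat; apply pow2_ge_0).
  assert (HL2 : 0 <= L2) by (unfold L2; repeat apply Rplus_le_le_0_compat; apply pow2_ge_0).
  assert (Hc : c^2 <= L1*L2).
  { assert (E : L1*L2 - c^2 = ((b1-a1)*(q2-p2) - (b2-a2)*(q1-p1))^2
       + ((b1-a1)*(q3-p3) - (b3-a3)*(q1-p1))^2 + ((b2-a2)*(q3-p3) - (b3-a3)*(q2-p2))^2).
    { unfold L1, L2, c; ring. }
    assert (0 <= L1*L2 - c^2) by (rewrite E; repeat apply Rplus_le_le_0_compat; apply pow2_ge_0). lra. }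
  assert (HZ : L2 = 0 -> W2 = 0 /\ c = 0).
  { intros Z. unfold L2 in Z.
    pose proof (pow2_ge_0 (q1-p1)). pose proof (pow2_ge_0 (q2-p2)). pose proof (pow2_ge_0 (q3-p3)).
    assert (Z1 : q1 - p1 = 0) by (destruct (Req_dec (q1 - p1) 0) as [?|NZ]; [assumption|exfalso; apply (pow_nonzero _ 2 NZ); lra]).
    assert (Z2 : q2 - p2 = 0) by (destruct (Req_dec (q2 - p2) 0) as [?|NZ]; [assumption|exfalso; apply (pow_nonzero _ 2 NZ); lra]).
    assert (Z3 : q3 - p3 = 0) by (destruct (Req_dec (q3 - p3) 0) as [?|NZ]; [assumption|exfalso; apply (pow_nonzero _ 2 NZ); lra]).
    unfold W2, c. rewrite Z1, Z2, Z3. split; ring. }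
  assert (Hnn : forall a b, 0 <= F a b).
  { intros a b. unfold F, Fq.
    assert (E : Fq W0 W1 W2 L1 L2 c a b =
      ((a1-p1) + a*(b1-a1) - b*(q1-p1))^2 + ((a2-p2) + a*(b2-a2) - b*(q2-p2))^2
      + ((a3-p3) + a*(b3-a3) - b*(q3-p3))^2).
    { unfold Fq, W0, W1, W2, L1, L2, c; ring. }
    unfold Fq in E. rewrite E. repeat apply Rplus_le_le_0_compat; apply pow2_ge_0. }
  rewrite EL1, EL2, E01, E10 in H.
  destruct (AbsMain W0 W1 W2 L1 L2 c HL1 HL2 Hc HZ Hnn H) as [s [t [Hs [Ht [Hmin G]]]]].
  fold F in Hmin, G.
  set (D := F s t).
  assert (HD : 0 <= D) by apply Hnn.
  set (sD := sqrt D).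
  assert (Hlow : sD <= dist_sets (segment s1p s1m) (segment s2p s2m)).
  { unfold dist_sets. apply glb_ge.
    - exists (edist s1p s2p). exists s1p, s2p. split; [|split; [|reflexivity]].
      + exists 0. split; [lra|]. subst; simpl; f_equal; [f_equal|]; ring.
      + exists 0. split; [lra|]. subst; simpl; f_equal; [f_equal|]; ring.
    - intros d [x [y [_ [_ ->]]]]. apply edist_pos.
    - intros d [x [y [[a [Ha ->]] [[b [Hb ->]] ->]]]].
      rewrite EF. apply sqrt_le_1_alt. apply Hmin; auto. }
  assert (Hdp : forall e P Q u, 0 <= u <= 1 -> dist_pt e (segment P Q) <= edist e (lerp P Q u)).
  { intros e P Q u Hu. unfold dist_pt. apply glb_lb.
    - exists (edist e (lerp P Q u)). exists (lerp P Q u). split; [exists u; split; auto|reflexivity].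
    - intros d [x [_ ->]]. apply edist_pos.
    - exists (lerp P Q u). split; [exists u; split; auto|reflexivity]. }
  set (M := Rmin (Rmin (dist_pt s1p (segment s2p s2m)) (dist_pt s1m (segment s2p s2m)))
         (Rmin (dist_pt s2p (segment s1p s1m)) (dist_pt s2m (segment s1p s1m)))).
  assert (HM : M <= sqrt 2 * sD).
  { assert (Hs2 : forall v, v <= 2*D -> sqrt v <= sqrt 2 * sD).
    { intros v Hv. unfold sD. rewrite <- sqrt_mult by lra. apply sqrt_le_1_alt. lra. }
    destruct G as [u [Hu [G|[G|[G|G]]]]].
    - unfold M. eapply Rle_trans. apply Rmin_l. eapply Rle_trans. apply Rmin_l.
      eapply Rle_trans. apply (Hdp _ _ _ u Hu). rewrite EP1. apply Hs2; auto.
    - unfold M. eapply Rle_trans. apply Rmin_l. eapply Rle_trans. apply Rmin_r.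
      eapply Rle_trans. apply (Hdp _ _ _ u Hu). rewrite EP2. apply Hs2; auto.
    - unfold M. eapply Rle_trans. apply Rmin_r. eapply Rle_trans. apply Rmin_l.
      eapply Rle_trans. apply (Hdp _ _ _ u Hu). rewrite EQ1. apply Hs2; auto.
    - unfold M. eapply Rle_trans. apply Rmin_r. eapply Rle_trans. apply Rmin_r.
      eapply Rle_trans. apply (Hdp _ _ _ u Hu). rewrite EQ2. apply Hs2; auto. }
  fold M. apply Rle_ge.
  assert (P2 : 0 < sqrt 2) by (apply sqrt_lt_R0; lra).
  apply Rle_trans with sD; [|exact Hlow].
  apply Rmult_le_reg_l with (sqrt 2); [exact P2|].
  rewrite <- Rmult_assoc, Rinv_r by lra. lra.
Qed.
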